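(* Let $p,q$ be distributions on $\mathbb{R}$ and $\epsilon\in[0,1)$ such that $\sup_{t\in\mathbb{R}}|\mathbb{P}_{X\sim p}(X\ge t)-\mathbb{P}_{Y\sim q}(Y\ge t)|\le\epsilon$. Then there exist distributions $r_p\le\frac{p}{1-\epsilon}$ and $r_q\le\frac{q}{1-\epsilon}$ such that $r_p$ is stochastically dominated by $r_q$ (i.e. $\mathbb{P}_{r_p}(X\le t)\ge\mathbb{P}_{r_q}(X\le t)$ for all $t$); in particular $\mathbb{E}_{r_p}[X]\le\mathbb{E}_{r_q}[X]$ whenever these expectations exist.
   Context: For distributions $r,p$ and $\epsilon\in[0,1)$, $r\le\frac{p}{1-\epsilon}$ means $r$ is a probability distribution with $r(A)\le p(A)/(1-\epsilon)$ for all measurable $A$. *)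

(* Defs.v *)
(* distributions on R are probability measures on the
   Borel sigma-algebra of R : realType. *)
From HB Require Import structures.
From mathcomp Require Import all_boot all_order all_algebra.
From mathcomp Require Import all_classical all_reals all_analysis.

(* Main.v *)
Require Import Defs.
From HB Require Import structures.
From mathcomp Require Import all_boot all_order all_algebra.
From mathcomp Require Import all_classical all_reals all_analysis.
From mathcomp Require Import lra.
Import Order.TTheory GRing.Theory Num.Theory.
Import numFieldTopology.Exports.
Local Open Scope classical_set_scope.
Local Open Scope ring_scope.

Section helpers.
Context {R : realType}.
Local Open Scope ereal_scope.

Lemma LS_ocitv (f : cumulative R R) (a b : R) : (a <= b)%R ->
  lebesgue_stieltjes_measure f `]a, b]%classic = (f b - f a)%:E.
Proof.
move=> ab; rewrite /lebesgue_stieltjes_measure /measure_extension/=.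
by rewrite measurable_mu_extE/= ?wlength_itv_bnd//; exact: is_ocitv.
Qed.

Lemma LS_unique (f : cumulative R R)
    (mu : {measure set (measurableTypeR R) -> \bar R}) :
  (forall a b : R, (a <= b)%R -> mu `]a, b]%classic = (f b - f a)%:E) ->
  forall A, measurable A -> lebesgue_stieltjes_measure f A = mu A.
Proof.
move=> H; apply: lebesgue_stieltjes_measure_unique => _ [[a b] _ <-] /=.
have [ab|ba] := leP a b; first by rewrite LS_ocitv // H.
by rewrite set_itv_ge ?measure0 // bnd_simp -leNgt ltW.
Qed.

Lemma rc_comp (F g : R -> R) : (forall t : R, F x @[x --> t^'+] --> F t) ->
  continuous g -> (forall t : R, (g \o F) x @[x --> t^'+] --> (g \o F) t).
Proof. by move=> hF hg t; exact: (cvg_comp _ _ (hF t) (hg (F t))). Qed.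

End helpers.

Section cdfP.
Context {R : realType} (P : probability R R).
Local Open Scope ereal_scope.
Let idRR : R -> R := idfun.
#[local] HB.instance Definition _ :=
  @isMeasurableFun.Build _ _ _ _ idRR (@measurable_id _ _ setT).

Definition Fc (t : R) : R := fine (P `]-oo, t]%classic).

Lemma FcE t : P `]-oo, t]%classic = (Fc t)%:E.
Proof. by rewrite /Fc fineK // fin_num_measure. Qed.

Lemma Fc_ge0 t : (0 <= Fc t)%R.
Proof. by rewrite -lee_fin -FcE. Qed.

Lemma Fc_le1 t : (Fc t <= 1)%R.
Proof. by rewrite -lee_fin -FcE probability_le1. Qed.

Lemma Fc_nd : {homo Fc : a b / (a <= b)%R}.
Proof.
move=> a b ab; rewrite -lee_fin -!FcE.
exact: (cdf_nondecreasing (idRR : {RV P >-> R})).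
Qed.

Lemma Fc_rc (a : R) : Fc x @[x --> a^'+] --> Fc a.
Proof.
have H : cdf (idRR : {RV P >-> R}) x @[x --> a^'+] --> (Fc a)%:E.
  rewrite -FcE; exact: cdf_right_continuous.
exact: (fine_cvg H).
Qed.

Local Close Scope ereal_scope.
Lemma Fc_Ny0 : Fc @ -oo --> (0:R).
Proof. exact: (fine_cvg (cvg_cdfNy0 (idRR : {RV P >-> R}))). Qed.

Lemma Fc_y1 : Fc @ +oo --> (1:R).
Proof. exact: (fine_cvg (cvg_cdfy1 (idRR : {RV P >-> R}))). Qed.

Local Open Scope ereal_scope.
Lemma Fc_oc a b : (a <= b)%R -> P `]a, b]%classic = (Fc b - Fc a)%:E.
Proof.
move=> ab.
have -> : `]a, b]%classic = `]-oo, b]%classic `\` `]-oo, a]%classic.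
  by rewrite -[RHS]setCK setCD setCitvl setUC -[LHS]setCK setCitv.
rewrite measureD ?setIidr//.
- by rewrite EFinB /Fc !fineK ?fin_num_measure.
- by apply: subset_itvl; rewrite bnd_simp.
- by rewrite -ge0_fin_numE// fin_num_measure.
Qed.

Lemma prob_geE s : P [set x | (s <= x)%R] = 1 - P `]-oo, s[%classic.
Proof.
rewrite -probability_setC //; congr (P _).
by apply/seteqP; split => x /=; rewrite in_itv /= leNgt => /negP.
Qed.

Lemma prob_lt_le s : P `]-oo, s[%classic <= P `]-oo, s]%classic.
Proof.
by apply: le_measure; rewrite ?inE //; apply: subset_itvl; rewrite bnd_simp.
Qed.

End cdfP.

Section intle.
Context {R : realType}.
Local Open Scope ereal_scope.
Let idRR : R -> R := idfun.
#[local] HB.instance Definition _ :=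
  @isMeasurableFun.Build _ _ _ _ idRR (@measurable_id _ _ setT).

Lemma setle (t : R) : [set x | (x <= t)%R] = `]-oo, t]%classic.
Proof. by apply/seteqP; split => x /=; rewrite in_itv /=. Qed.

Lemma LS_cdf (f : cumulativeBounded (0:R) 1) t :
  lebesgue_stieltjes_measure f [set x | (x <= t)%R] = (f t)%:E.
Proof. rewrite setle; exact: cdf_lebesgue_stieltjes_id. Qed.

Lemma cdfE (S : probability R R) t :
  cdf (idRR : {RV S >-> R}) t = S [set x | (x <= t)%R].
Proof. by rewrite setle. Qed.

Lemma ccdfE (S : probability R R) t :
  ccdf (idRR : {RV S >-> R}) t = 1 - S [set x | (x <= t)%R].
Proof.
transitivity (S (~` `]-oo, t]%classic)); first by rewrite setCitvl.
by rewrite probability_setC // setle.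
Qed.

Lemma ccdf_mR (S : probability R R) (D : set (measurableTypeR R)) :
  measurable D -> @measurable_fun _ _ (measurableTypeR R) (measurable_realfun.constructive_ereal_extended__canonical__measurable_structure_SigmaRing R) D (fun r : measurableTypeR R => ccdf (idRR : {RV S >-> R}) r).
Proof.
move=> mD.
have mc : @measurable_fun _ _ (measurableTypeR R) (measurable_realfun.constructive_ereal_extended__canonical__measurable_structure_SigmaRing R) setT (fun r : measurableTypeR R => ccdf (idRR : {RV S >-> R}) r).
  exact: ccdf_measurable.
move=> _ Y mY; apply: measurableI => //.
by have := mc measurableT Y mY; rewrite setTI.
Qed.

Lemma cdf_mR (S : probability R R) (D : set (measurableTypeR R)) :
  measurable D -> @measurable_fun _ _ (measurableTypeR R) (measurable_realfun.constructive_ereal_extended__canonical__measurable_structure_SigmaRing R) D (fun r : measurableTypeR R => cdf (idRR : {RV S >-> R}) r).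
Proof.
move=> mD.
have mc : @measurable_fun _ _ (measurableTypeR R) (measurable_realfun.constructive_ereal_extended__canonical__measurable_structure_SigmaRing R) setT (fun r : measurableTypeR R => cdf (idRR : {RV S >-> R}) r).
  exact: cdf_measurable.
move=> _ Y mY; apply: measurableI => //.
by have := mc measurableT Y mY; rewrite setTI.
Qed.

Lemma int_le (P Q : probability R R) :
  (forall t, Q [set x | (x <= t)%R] <= P [set x | (x <= t)%R]) ->
  P.-integrable setT (fun x => x%:E) -> Q.-integrable setT (fun x => x%:E) ->
  \int[P]_x x%:E <= \int[Q]_x x%:E.
Proof.
move=> hPQ iP iQ.
have -> : \int[P]_x x%:E = 'E_P[idRR : {RV P >-> R}] by rewrite expectation_def.
have -> : \int[Q]_x x%:E = 'E_Q[idRR : {RV Q >-> R}] by rewrite expectation_def.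
rewrite !expectation_cdf_ccdf; [|exact/Lfun1_integrable..].
apply: leeB; apply: ge0_le_integral => //.
- exact: ccdf_mR.
- exact: ccdf_mR.
- by move=> x _; rewrite !ccdfE; apply: leeB => //; exact: hPQ.
- exact: cdf_mR.
- exact: cdf_mR.
- by move=> x _; rewrite !cdfE; exact: hPQ.
Qed.

End intle.

Definition PR {R : realType} (P : probability R R) :
  set (measurableTypeR R) -> \bar R := fun A => P A.

Section PRsec.
Context {R : realType} (P : probability R R).
Local Open Scope ereal_scope.
Lemma PR0 : PR P set0 = 0. Proof. exact: measure0. Qed.
Lemma PR_ge0 A : 0 <= PR P A. Proof. exact: measure_ge0. Qed.
Lemma PR_sa : semi_sigma_additive (PR P).
Proof. exact: (@measure_semi_sigma_additive _ _ _ P). Qed.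
End PRsec.

HB.instance Definition _ (R : realType) (P : probability R R) :=
  isMeasure.Build _ _ _ (PR P) (PR0 P) (PR_ge0 P) (PR_sa P).

Section fun_lemmas.
Context {R : realType} (e : R) (e_ge0 : 0 <= e).

Definition g1 (u : R) : R := Order.min 1 u.
Definition k1 (u : R) : R := u - Order.min 1 u.
Definition g2 (u : R) : R := Order.max 0 (u - e).
Definition k2 (u : R) : R := u - Order.max 0 (u - e).

Lemma g1_nd : {homo g1 : a b / a <= b}.
Proof. move=> a b ab; rewrite /g1; case: (ltP 1 a); case: (ltP 1 b) => *; lra. Qed.
Lemma k1_nd : {homo k1 : a b / a <= b}.
Proof. move=> a b ab; rewrite /k1; case: (ltP 1 a); case: (ltP 1 b) => *; lra. Qed.
Lemma g2_nd : {homo g2 : a b / a <= b}.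
Proof. move=> a b ab; rewrite /g2; case: (ltP 0 (a - e)); case: (ltP 0 (b - e)) => *; lra. Qed.
Lemma k2_nd : {homo k2 : a b / a <= b}.
Proof. move=> a b ab; rewrite /k2; case: (ltP 0 (a - e)); case: (ltP 0 (b - e)) => *; lra. Qed.

Lemma g1_c : continuous g1.
Proof.
move=> x; apply: (@continuous_min _ _ (cst 1) id); [exact: cvg_cst | exact: cvg_id].
Qed.
Lemma g2_c : continuous g2.
Proof.
move=> x; apply: (@continuous_max _ _ (cst 0) (fun u => u - e)); first exact: cvg_cst.
by apply: cvgB; [exact: cvg_id | exact: cvg_cst].
Qed.
Lemma k1_c : continuous k1.
Proof. by move=> x; apply: cvgB; [exact: cvg_id | exact: g1_c]. Qed.
Lemma k2_c : continuous k2.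
Proof. by move=> x; apply: cvgB; [exact: cvg_id | exact: g2_c]. Qed.

End fun_lemmas.

Section main.
Context {R : realType} (p q : probability R R) (eps : R)
  (eps_ge0 : (0 <= eps)%R) (eps_lt1 : (eps < 1)%R)
  (hsup : forall t : R,
     (`| p [set x | (t <= x)%R] - q [set x | (t <= x)%R] | <= eps%:E)%E).

Let c : R := 1 - eps.
Let c_gt0 : 0 < c. Proof. by rewrite /c subr_gt0. Qed.
Let c_le1 : c <= 1. Proof. by rewrite /c gerBl. Qed.
Let e : R := eps / c.
Let e_ge0 : 0 <= e. Proof. by rewrite /e divr_ge0 // ltW. Qed.
Let invc1 : 1 <= c^-1. Proof. by rewrite invf_ge1. Qed.

Lemma key t : Fc q t <= Fc p t + eps.
Proof.
have H s : t < s -> Fc q t - eps <= Fc p s.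
  move=> ts.
  have h1 := hsup s.
  rewrite !prob_geE in h1.
  have Lp : p `]-oo, s[%classic = (fine (p `]-oo, s[%classic))%:E.
    by rewrite fineK // fin_num_measure.
  have Lq : q `]-oo, s[%classic = (fine (q `]-oo, s[%classic))%:E.
    by rewrite fineK // fin_num_measure.
  have h2 : Fc q t <= fine (q `]-oo, s[%classic).
    rewrite -lee_fin -Lq -FcE; apply: le_measure; rewrite ?inE //.
    by apply: subset_itvl; rewrite bnd_simp.
  have h3 : fine (p `]-oo, s[%classic) <= Fc p s.
    by rewrite -lee_fin -Lp -FcE; exact: prob_lt_le.
  rewrite Lp Lq -!EFinB abse_EFin lee_fin in h1.
  move: h1; rewrite ler_norml => /andP[h1 h1'].
  lra.
have : Fc q t - eps <= lim (Fc p x @[x --> t^'+]).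
  apply: limr_ge; first exact: cvgP (Fc_rc p t).
  near=> s; apply: H; near: s; exact: nbhs_right_gt.
rewrite (cvg_lim _ (Fc_rc p t)) //; lra.
Unshelve. all: by end_near. Qed.


Let cinv_ge0 : 0 <= c^-1. Proof. by rewrite invr_ge0 ltW. Qed.
Let cinv : {nonneg R} := NngNum cinv_ge0.

Lemma H_nd (P : probability R R) : {homo (fun t => Fc P t / c) : a b / a <= b}.
Proof. by move=> a b ab; rewrite ler_pM2r ?invr_gt0 // Fc_nd. Qed.
Lemma H_rc (P : probability R R) t :
  (fun t => Fc P t / c) x @[x --> t^'+] --> Fc P t / c.
Proof. exact: cvgMr_tmp (Fc_rc P t). Qed.
Lemma H_Ny0 (P : probability R R) : (fun t => Fc P t / c) @ -oo --> (0:R).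
Proof. by rewrite -[X in _ --> X](mul0r c^-1); apply: cvgMr_tmp; exact: Fc_Ny0. Qed.
Lemma H_y1 (P : probability R R) : (fun t => Fc P t / c) @ +oo --> c^-1.
Proof. by rewrite -[X in _ --> X](mul1r c^-1); apply: cvgMr_tmp; exact: Fc_y1. Qed.

Let Hp (t : R) : R := Fc p t / c.
Let Hq (t : R) : R := Fc q t / c.
#[local] HB.instance Definition _ := isCumulative.Build R _ R Hp (H_nd p) (H_rc p).
#[local] HB.instance Definition _ := isCumulative.Build R _ R Hq (H_nd q) (H_rc q).

Let Gp (t : R) : R := g1 (Hp t).
Let Kp (t : R) : R := k1 (Hp t).
Let Gq (t : R) : R := g2 e (Hq t).
Let Kq (t : R) : R := k2 e (Hq t).

Let Gp_nd : {homo Gp : a b / a <= b}.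
Proof. by move=> a b ab; apply: g1_nd; apply: H_nd. Qed.
Let Kp_nd : {homo Kp : a b / a <= b}.
Proof. by move=> a b ab; apply: k1_nd; apply: H_nd. Qed.
Let Gq_nd : {homo Gq : a b / a <= b}.
Proof. by move=> a b ab; apply: g2_nd; apply: H_nd. Qed.
Let Kq_nd : {homo Kq : a b / a <= b}.
Proof. by move=> a b ab; apply: k2_nd; apply: H_nd. Qed.

Let Gp_rc t : Gp x @[x --> t^'+] --> Gp t.
Proof. exact: (rc_comp _ _ (H_rc p) g1_c t). Qed.
Let Kp_rc t : Kp x @[x --> t^'+] --> Kp t.
Proof. exact: (rc_comp _ _ (H_rc p) k1_c t). Qed.
Let Gq_rc t : Gq x @[x --> t^'+] --> Gq t.
Proof. exact: (rc_comp _ _ (H_rc q) (g2_c e) t). Qed.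
Let Kq_rc t : Kq x @[x --> t^'+] --> Kq t.
Proof. exact: (rc_comp _ _ (H_rc q) (k2_c e) t). Qed.

#[local] HB.instance Definition _ := isCumulative.Build R _ R Gp Gp_nd Gp_rc.
#[local] HB.instance Definition _ := isCumulative.Build R _ R Kp Kp_nd Kp_rc.
#[local] HB.instance Definition _ := isCumulative.Build R _ R Gq Gq_nd Gq_rc.
#[local] HB.instance Definition _ := isCumulative.Build R _ R Kq Kq_nd Kq_rc.

Let Gp_Ny0 : Gp @ -oo --> (0:R).
Proof.
have -> : (0:R) = g1 0 by rewrite /g1; case: ltP => //; lra.
exact: (cvg_comp _ _ (H_Ny0 p) (g1_c 0)).
Qed.
Let Gp_y1 : Gp @ +oo --> (1:R).
Proof.
have -> : (1:R) = g1 c^-1.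
  by rewrite /g1; case: ltP => // h; apply/eqP; rewrite eq_le invc1 h.
exact: (cvg_comp _ _ (H_y1 p) (g1_c _)).
Qed.
Let Gq_Ny0 : Gq @ -oo --> (0:R).
Proof.
have -> : (0:R) = g2 e 0.
  by rewrite /g2 sub0r; case: ltP => // h; rewrite oppr_gt0 ltNge e_ge0 in h.
exact: (cvg_comp _ _ (H_Ny0 q) (g2_c e 0)).
Qed.
Let Gq_y1 : Gq @ +oo --> (1:R).
Proof.
have ce : c^-1 - e = 1.
  by rewrite /e -[X in X - _]mul1r -mulrBl mulfV // gt_eqF.
have -> : (1:R) = g2 e c^-1.
  by rewrite /g2 ce; case: ltP => // h; rewrite ler10 in h.
exact: (cvg_comp _ _ (H_y1 q) (g2_c e _)).
Qed.

#[local] HB.instance Definition _ := isCumulativeBounded.Build R 0 1 Gp Gp_Ny0 Gp_y1.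
#[local] HB.instance Definition _ := isCumulativeBounded.Build R 0 1 Gq Gq_Ny0 Gq_y1.

Local Open Scope ereal_scope.

Lemma decomp (P : probability R R) (H G K : cumulative R R) :
  (forall t, H t = Fc P t / c)%R -> (forall t, G t + K t = H t)%R ->
  forall A, measurable A ->
  lebesgue_stieltjes_measure G A + lebesgue_stieltjes_measure K A
  = (c^-1)%:E * P A.
Proof.
move=> HE GKE A mA.
have E1 : lebesgue_stieltjes_measure H A =
    measure_add (lebesgue_stieltjes_measure G) (lebesgue_stieltjes_measure K) A.
  apply: LS_unique => // a b ab.
  transitivity (lebesgue_stieltjes_measure G `]a, b]%classic +
     lebesgue_stieltjes_measure K `]a, b]%classic); first exact: measure_addE.
  rewrite !LS_ocitv // -EFinD; congr EFin.
  rewrite -!GKE; lra.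
have E2 : lebesgue_stieltjes_measure H A = mscale cinv (PR P) A.
  apply: LS_unique => // a b ab.
  transitivity ((c^-1)%:E * P `]a, b]%classic); first by [].
  rewrite Fc_oc // -EFinM; congr EFin.
  by rewrite !HE mulrBr ![(c^-1 * _)%R]mulrC.
transitivity (measure_add (lebesgue_stieltjes_measure G)
  (lebesgue_stieltjes_measure K) A); first by symmetry; exact: measure_addE.
by rewrite -E1 E2.
Qed.


Let idTR : measurableTypeR R -> R := idfun.
#[local] HB.instance Definition _ :=
  @isMeasurableFun.Build _ _ _ _ idTR (@measurable_id _ _ setT).

Lemma main_ex : exists rp rq : probability R R,
    (forall A : set R, measurable A -> rp A <= ((1 - eps)^-1)%:E * p A) /\
    (forall A : set R, measurable A -> rq A <= ((1 - eps)^-1)%:E * q A) /\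
    (forall t : R, rq [set x | (x <= t)%R] <= rp [set x | (x <= t)%R]) /\
    (rp.-integrable setT (fun x => x%:E) -> rq.-integrable setT (fun x => x%:E) ->
       \int[rp]_x x%:E <= \int[rq]_x x%:E).
Proof.
exists (distribution (lebesgue_stieltjes_measure Gp) idTR).
exists (distribution (lebesgue_stieltjes_measure Gq) idTR).
have hcdf : forall t : R,
    distribution (lebesgue_stieltjes_measure Gq) idTR [set x | (x <= t)%R] <=
    distribution (lebesgue_stieltjes_measure Gp) idTR [set x | (x <= t)%R].
  move=> t.
  change (lebesgue_stieltjes_measure Gq [set x | (x <= t)%R] <=
          lebesgue_stieltjes_measure Gp [set x | (x <= t)%R]).
  rewrite !LS_cdf lee_fin /=.
  have h1 : (Hq t - e <= Hp t)%R.
    rewrite /e /Hq /Hp -mulrBl ler_pM2r ?invr_gt0 // lerBlDr; exact: key.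
  have h2 : (Hq t - e <= 1)%R.
    by rewrite /e /Hq -mulrBl ler_pdivrMr // mul1r /c lerD2r Fc_le1.
  have h3 : (0 <= Hp t)%R by rewrite /Hp divr_ge0 ?Fc_ge0 // ltW.
  by rewrite /Gq /Gp /g2 /g1 ge_max !le_min ler01 h1 h2 h3.
split; [|split; [|split]].
- move=> A mA.
  change (lebesgue_stieltjes_measure Gp A <= (c^-1)%:E * p A).
  rewrite -(@decomp p Hp Gp Kp _ _ A mA) //; first exact: leeDl.
  by move=> t; rewrite /= /Gp /Kp /k1 /g1 addrC subrK.
- move=> A mA.
  change (lebesgue_stieltjes_measure Gq A <= (c^-1)%:E * q A).
  rewrite -(@decomp q Hq Gq Kq _ _ A mA) //; first exact: leeDl.
  by move=> t; rewrite /= /Gq /Kq /k2 /g2 addrC subrK.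
- exact: hcdf.
- exact: int_le.
Qed.

End main.

Local Open Scope ereal_scope.

Theorem lemma3p6 (R : realType) (p q : probability R R) (eps : R)
  (eps_ge0 : (0 <= eps)%R) (eps_lt1 : (eps < 1)%R)
  (hsup : forall t : R,
     `| p [set x | (t <= x)%R] - q [set x | (t <= x)%R] | <= eps%:E) :
  exists rp rq : probability R R,
    (forall A : set R, measurable A -> rp A <= ((1 - eps)^-1)%:E * p A) /\
    (forall A : set R, measurable A -> rq A <= ((1 - eps)^-1)%:E * q A) /\
    (forall t : R, rq [set x | (x <= t)%R] <= rp [set x | (x <= t)%R]) /\
    (rp.-integrable setT (fun x => x%:E) -> rq.-integrable setT (fun x => x%:E) ->
       \int[rp]_x x%:E <= \int[rq]_x x%:E).
Proof. exact: (@main_ex R p q eps eps_ge0 eps_lt1 hsup). Qed.
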